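(* Let $n\ge 3$. The wheel $W_n$ (of order $n+1$) admits an $(a,d)$-distance antimagic labeling for some integers $a$ and $d\ge0$ if and only if $3\le n\le 5$.
   Context: The wheel $W_n$ ($n\ge3$) is obtained from a cycle $x_1x_2\cdots x_nx_1$ by adding a center vertex $x_0$ adjacent to all $x_1,\dots,x_n$. For a graph $G=(V,E)$ with $v=|V|$ and a bijection $f:V\to\{1,\dots,v\}$, the vertex-weight of $x$ is $w(x)=\sum_{y\in N(x)}f(y)$ with $N(x)$ the set of neighbours of $x$. For integers $a$ and $d\ge0$, $f$ is an $(a,d)$-distance antimagic labeling if the multiset of vertex-weights equals $\{a,a+d,\dots,a+(v-1)d\}$ (for $d=0$: all weights equal). *)

(* Defs.v *)
From mathcomp Require Import all_boot all_order all_algebra.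
Set Implicit Arguments. Unset Strict Implicit. Unset Printing Implicit Defensive.
Import GRing.Theory Num.Theory.

(* A simple graph on vertex set 'I_v is given by a symmetric irreflexive
   adjacency relation e. *)

(* Wheel W_n on vertex set 'I_(n.+1): vertex 0 is the centre x_0, vertex i
   (1 <= i <= n) is x_i; the rim is the cycle x_1 x_2 ... x_n x_1, i.e. x_i is
   adjacent to x_(i %% n + 1). *)
Definition wheel_adj (n : nat) : rel 'I_n.+1 := fun x y =>
  [|| (val x == 0) && (val y != 0),
      (val y == 0) && (val x != 0)
    | [&& val x != 0, val y != 0 &
          (val y == val x %% n + 1) || (val x == val y %% n + 1)]].

Arguments wheel_adj n : clear implicits.

Definition vweight (v : nat) (e : rel 'I_v) (f : 'I_v -> nat) (x : 'I_v) : nat :=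
  \sum_(y : 'I_v | e x y) f y.

Definition is_labeling (v : nat) (f : 'I_v -> nat) : Prop :=
  injective f /\ (forall x, 1 <= f x <= v)%N.

Definition ad_distance_antimagic (v : nat) (e : rel 'I_v) (a d : int)
    (f : 'I_v -> nat) : Prop :=
  is_labeling f /\
  perm_eq [seq (Posz (vweight e f x)) | x <- enum 'I_v]
          [seq (a + (Posz k) * d)%R | k <- iota 0 v].

(* Main.v *)
Require Import Defs.
From mathcomp Require Import all_boot all_order all_algebra zify.
Import GRing.Theory Num.Theory.

Lemma lab_of (m : nat) (s : seq nat) :
  size s = m -> uniq s -> all (fun k => 1 <= k <= m)%N s ->
  is_labeling (fun x : 'I_m => nth 0%N s x).
Proof.
move=> hs hu ha; split.
  move=> x y /eqP; rewrite nth_uniq ?hs // => /eqP; exact: val_inj.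
move=> x; apply: (allP ha); apply: mem_nth; rewrite hs.
exact: ltn_ord.
Qed.

Lemma vweightE v (e : rel 'I_v) f x :
  vweight e f x = \sum_(i < v) (if e x i then f i else 0%N).
Proof. by rewrite /vweight big_mkcond. Qed.
Definition f5 := (fun x : 'I_5 => nth 0%N [:: 5;1;2;4;3]%N x).
Goal perm_eq [seq (Posz (vweight (wheel_adj 4) f5 x)) | x <- enum 'I_5]
          [seq (Posz 10 + (Posz k) * Posz 0)%R | k <- iota 0 5].
rewrite !enum_ordSl enum_ord0 /= !vweightE.
repeat rewrite big_ord_recl. rewrite !big_ord0.
vm_compute. reflexivity.
Qed.
Definition nxt n i := if i == n then 1 else i.+1.
Definition prv n i := if i == 1 then n else i.-1.

Lemma rim_nb n i j : 3 <= n -> 0 < i <= n -> j <= n ->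
  [|| (i == 0) && (j != 0), (j == 0) && (i != 0) | [&& i != 0, j != 0 & (j == i %% n + 1) || (i == j %% n + 1)]]
   = [|| j == 0, j == nxt n i | j == prv n i].
Proof.
move=> h3 hi hj; rewrite /nxt /prv.
have mi : i %% n = if i == n then 0 else i.
  case: eqP => [->|ne]; first by rewrite modnn. rewrite modn_small //; lia.
have mj : j %% n = if j == n then 0 else j.
  case: eqP => [->|ne]; first by rewrite modnn. rewrite modn_small //; lia.
rewrite mi mj.
repeat case: eqP; lia.
Qed.

Lemma rim_weight n (f : 'I_n.+1 -> nat) (x : 'I_n.+1) :
  3 <= n -> is_labeling f -> x != ord0 ->
  6 <= vweight (wheel_adj n) f x <= 3 * n.
Proof.
move=> h3 [finj fb] hx.
have hi : 0 < x <= n by move: hx (ltn_ord x); rewrite -val_eqE /=; lia.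
have hnx : nxt n x < n.+1 by rewrite /nxt; case: eqP; lia.
have hpx : prv n x < n.+1 by rewrite /prv; case: eqP; lia.
set nx := Ordinal hnx; set px := Ordinal hpx.
have E : vweight (wheel_adj n) f x = \sum_(y <- [:: ord0; nx; px]) f y.
  rewrite big_uniq; last first.
    rewrite /= !inE -!val_eqE /= /nxt /prv; repeat case: eqP; lia.
  apply: eq_bigl => y.
  rewrite !inE -!val_eqE /=.
  have hy := ltn_ord y.
  by rewrite /wheel_adj rim_nb //.
rewrite E !big_cons big_nil addn0.
have d1 : f ord0 != f nx by apply/eqP => /finj /(congr1 val) /=; rewrite /nxt; case: eqP; lia.
have d2 : f ord0 != f px by apply/eqP => /finj /(congr1 val) /=; rewrite /prv; case: eqP; lia.
have d3 : f nx != f px by apply/eqP => /finj /(congr1 val) /=; rewrite /nxt /prv; repeat case: eqP; lia.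
move: (fb ord0) (fb nx) (fb px) d1 d2 d3; lia.
Qed.
Lemma sum_iota1 m : (\sum_(i <- iota 1 m) i).*2 = m * m.+1.
Proof.
elim: m => [|m IH]; first by rewrite big_nil.
have -> : iota 1 m.+1 = iota 1 m ++ [:: m.+1] by have := iotaD 1 m 1; rewrite addn1 add1n.
rewrite big_cat big_seq1 /= doubleD IH.
lia.
Qed.

Lemma sum_lab v (f : 'I_v -> nat) : is_labeling f ->
  (\sum_y f y).*2 = v * v.+1.
Proof.
move=> [finj fb].
have U : uniq (map f (enum 'I_v)) by rewrite map_inj_uniq ?enum_uniq.
have S : {subset map f (enum 'I_v) <= iota 1 v}.
  move=> k /mapP [y _ ->]; rewrite mem_iota; move: (fb y); lia.
have P : perm_eq (map f (enum 'I_v)) (iota 1 v).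
  have Sz : size (iota 1 v) <= size (map f (enum 'I_v)) by rewrite size_iota size_map size_enum_ord.
  have [_ E] := uniq_min_size U S Sz.
  by apply: uniq_perm => //; apply: iota_uniq.
rewrite -sum_iota1 -(perm_big _ P) /= big_map big_enum //.
Qed.

Lemma center_weight n (f : 'I_n.+1 -> nat) : is_labeling f ->
  n * n.+1 <= (vweight (wheel_adj n) f ord0).*2.
Proof.
move=> hf; have := @sum_lab _ f hf; have := (proj2 hf ord0).
have -> : vweight (wheel_adj n) f ord0 = \sum_(y | y != ord0) f y.
  by apply: eq_bigl => y; rewrite /wheel_adj -val_eqE /=; case: eqP.
rewrite (bigD1 ord0) //=.
lia.
Qed.
Lemma arith (n k j r W0 : nat) (a d : int) : 5 < n -> k < n.+1 -> (0 <= d)%R ->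
  n * n.+1 <= W0.*2 -> Posz W0 = (a + Posz k * d)%R ->
  6 <= r <= 3 * n -> Posz r = (a + Posz j * d)%R ->
  (Posz W0 = a \/ (Posz 6 <= a /\ a <= Posz (3 * n))%R) ->
  (Posz W0 = (a + Posz (n-1) * d)%R \/ (Posz 6 <= a + Posz (n-1) * d /\ a + Posz (n-1) * d <= Posz (3 * n))%R) ->
  (Posz W0 = (a + Posz n * d)%R \/ (Posz 6 <= a + Posz n * d /\ a + Posz n * d <= Posz (3 * n))%R) ->
  False.
Proof.
move=> h5 hk hd H0 Hk Hr1 Hr2 Ha Hb Hc.
have h7 : 7 * n <= n * n.+1 by nia.
have H1 : 7 * n <= W0.*2 by lia.
clear H0.
have [d0|dpos] : d = 0%R \/ (0 < d)%R by lia.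
  subst d; rewrite !mulr0 !addr0 in Hk Hr2 Hb Hc; lia.
have e1 : (Posz k * d <= Posz n * d)%R by nia.
have e2 : (Posz (n-1) * d = Posz n * d - d)%R.
  have -> : Posz (n-1) = (Posz n - 1)%R by lia.
  by rewrite mulrBl mul1r.
rewrite e2 in Hb.
have [d2|d3] : (d <= 2)%R \/ (3 <= d)%R by lia.
  lia.
have e3 : (Posz n * 3 <= Posz n * d)%R by nia.
have e4 : (Posz 6 * d <= Posz n * d)%R by nia.
have e5 : (Posz 3 * Posz n + d <= Posz n * d + 3)%R by nia.
lia.
Qed.

Theorem mainTheorem11 (n : nat) (hn : (3 <= n)%N) :
  (exists (a d : int) (f : 'I_n.+1 -> nat),
      (0 <= d)%R /\ ad_distance_antimagic (wheel_adj n) a d f)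
  <-> (n <= 5)%N.
Proof.
split.
  move=> [a [d [f [hd [hf hp]]]]].
  rewrite leqNgt; apply/negP => h5.
  set W := vweight (wheel_adj n) f.
  have hW : forall z, z \in [seq Posz (W x) | x <- enum 'I_n.+1] ->
      z = Posz (W ord0) \/ (Posz 6 <= z /\ z <= Posz (3 * n))%R.
    move=> z /mapP [x _ ->].
    case: (eqVneq x ord0) => [->|hx]; first by left.
    right; have := @rim_weight n f x hn hf hx; rewrite -/W; lia.
  have memA : forall k, k <= n -> (a + Posz k * d)%R \in [seq Posz (W x) | x <- enum 'I_n.+1].
    move=> k hk; rewrite (perm_mem hp); apply/mapP; exists k => //; rewrite mem_iota; lia.
  have : Posz (W ord0) \in [seq (a + Posz k * d)%R | k <- iota 0 n.+1].
    by rewrite -(perm_mem hp); apply: map_f; rewrite mem_enum.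
  case/mapP => k; rewrite mem_iota => hk Hk.
  have hx1 : (inord 1 : 'I_n.+1) != ord0 by rewrite -val_eqE /= inordK //; lia.
  have Hr := @rim_weight n f (inord 1) hn hf hx1.
  have : Posz (W (inord 1)) \in [seq (a + Posz k * d)%R | k <- iota 0 n.+1].
    by rewrite -(perm_mem hp); apply: map_f; rewrite mem_enum.
  case/mapP => j _ Hj.
  apply: (@arith n k j (W (inord 1)) (W ord0) a d) => //.
  - exact: center_weight.
  - have := hW _ (memA 0 (leq0n n)); rewrite mul0r addr0 => -[->|]; [by left|by right].
  - have [->|?] := hW _ (memA (n-1) (leq_subr 1 n)); [by left|by right].
  - have [->|?] := hW _ (memA n (leqnn n)); [by left|by right].
move=> h5.
have : [|| n == 3, n == 4 | n == 5] by lia.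
case/or3P => /eqP ->.
- exists (Posz 6), (Posz 1), (fun x : 'I_4 => nth 0%N [:: 1;2;3;4]%N x); split=> //.
  split; first by apply: lab_of.
  rewrite !enum_ordSl enum_ord0 /= !vweightE.
  repeat rewrite big_ord_recl. rewrite !big_ord0.
  vm_compute. reflexivity.
- exists (Posz 10), (Posz 0), (fun x : 'I_5 => nth 0%N [:: 5;1;2;4;3]%N x); split=> //.
  split; first by apply: lab_of.
  rewrite !enum_ordSl enum_ord0 /= !vweightE.
  repeat rewrite big_ord_recl. rewrite !big_ord0.
  vm_compute. reflexivity.
- exists (Posz 10), (Posz 1), (fun x : 'I_6 => nth 0%N [:: 6;1;2;3;4;5]%N x); split=> //.
  split; first by apply: lab_of.
  rewrite !enum_ordSl enum_ord0 /= !vweightE.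
  repeat rewrite big_ord_recl. rewrite !big_ord0.
  vm_compute. reflexivity.
Qed.
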